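(* Let $F\subsetneq K$ be fields of characteristic $0$, with $F$ a proper nonempty subfield of $K$. Let $p(x)=\sum_{k=0}^{n}a_k x^k\in K[x]$ be non-constant with $0\neq a_n\in F$. Let $q\in K[x,y]\setminus F[x,y]$, written $q(x,y)=\sum_{j=0}^{m}q_j(x,y)$ with each $q_j$ homogeneous of degree $j$ and $0\neq q_m\in F[x,y]$. If $q_j\notin F[x,y]$ for some $j\geq 1$, then $p(q(x,y))\notin F[x,y]$ and $D_F(p\circ q)=D_F(q)$.
   Context: $F[x,y]$ denotes polynomials in $x,y$ with all coefficients in $F$. For $h\in K[x,y]$ written $h=\sum_{k=0}^{N}h_k$ with $h_k$ homogeneous of degree $k$ and $h_N\neq 0$: if $h\notin F[x,y]$, $D_F(h)=N-\max\{k: h_k\notin F[x,y]\}$; if $h\in F[x,y]$, $D_F(h)=N$. *)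

(* Defs.v *)
From HB Require Import structures.
From mathcomp Require Import all_boot all_order all_algebra.
From mathcomp.multinomials Require Import mpoly.
Set Implicit Arguments. Unset Strict Implicit. Unset Printing Implicit Defensive.
Import Order.TTheory GRing.Theory.
Local Open Scope ring_scope.

Definition hcomp (K : fieldType) (k : nat) (h : {mpoly K[2]}) : {mpoly K[2]} :=
  \sum_(m <- msupp h | mdeg m == k) h@_m *: 'X_[m].

Definition tdeg (K : fieldType) (h : {mpoly K[2]}) : nat := (msize h).-1.

Definition DF (K : fieldType) (F : {pred K}) (h : {mpoly K[2]}) : nat :=
  if h \is a mpolyOver 2 F then tdeg h
  else (tdeg h - \max_(k < msize h | hcomp k h \isn't a mpolyOver 2 F) k)%N.

Definition pcompq (K : fieldType) (p : {poly K}) (q : {mpoly K[2]}) : {mpoly K[2]} :=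
  (map_poly (@mpolyC 2 K) p).[q].

(* Main.v *)
Require Import Defs.
From HB Require Import structures.
From mathcomp Require Import all_boot all_order all_algebra.
From mathcomp.multinomials Require Import mpoly.
From mathcomp Require Import zify ring.
Import GRing.Theory.
Local Open Scope ring_scope.

Section Aux.
Variable K : fieldType. Local Notation n := 2%N.
Implicit Types (h g f : {mpoly K[n]}).

Definition trunc (P : pred 'X_{1..n}) h :=
  \sum_(m <- msupp h | P m) h@_m *: 'X_[m].

Lemma mcoeff_trunc P h mo : (trunc P h)@_mo = if P mo then h@_mo else 0.
Proof.
rewrite /trunc raddf_sum /= big_mkcond /=.
under eq_bigr => m _ do rewrite mcoeffZ mcoeffX.
case: (boolP (mo \in msupp h)) => Hin.
  rewrite (bigD1_seq mo) ?msupp_uniq //= eqxx mulr1 big1 ?addr0.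
    by case: (P mo).
  by move=> m /negbTE ->; rewrite mulr0; case: (P m).
rewrite big_seq big1; last first.
  move=> m Hm; have -> : (m == mo) = false.
    by apply/negbTE; apply: contraNneq Hin => <-.
  by rewrite mulr0; case: (P m).
by move: Hin; rewrite -mcoeff_eq0 => /eqP ->; case: (P mo).
Qed.

Lemma mcoeff_hcomp k h mo :
  (hcomp k h)@_mo = if mdeg mo == k then h@_mo else 0.
Proof. exact: (mcoeff_trunc (fun m => mdeg m == k)). Qed.

Lemma msize_leP t h :
  reflect (forall mo, (t <= mdeg mo)%N -> h@_mo = 0) (msize h <= t)%N.
Proof.
apply: (iffP idP).
  move=> H mo Hmo; apply/eqP; rewrite mcoeff_eq0.
  by apply: msize_mdeg_ge; apply: leq_trans Hmo.
move=> H; rewrite leqNgt; apply/negP => Hlt.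
have nzh : h != 0 by rewrite -msize_poly_eq0 -lt0n; apply: leq_ltn_trans Hlt.
have Hd := mlead_deg nzh.
move: (mlead_supp nzh); rewrite mcoeff_msupp H ?eqxx //.
by rewrite -ltnS Hd.
Qed.

Lemma msizeM_le2 g h : (msize (g * h) <= (msize g + msize h).-1)%N.
Proof.
have [->|nzg] := eqVneq g 0; first by rewrite mul0r msize0.
have [->|nzh] := eqVneq h 0; first by rewrite mulr0 msize0.
by rewrite msizeM.
Qed.

Lemma msizeX_le g s k : (msize g <= s.+1)%N -> (msize (g ^+ k) <= (s * k).+1)%N.
Proof.
move=> Hg; elim: k => [|k IH]; first by rewrite expr0 msize1.
rewrite exprS; apply: leq_trans (msizeM_le2 _ _) _.
have := leq_add Hg IH; lia.
Qed.

Lemma msizeX_eq g k : g != 0 -> msize (g ^+ k) = ((msize g).-1 * k).+1.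
Proof.
move=> nzg; elim: k => [|k IH]; first by rewrite expr0 msize1 muln0.
rewrite exprS msizeM ?expf_neq0 // IH.
have : (0 < msize g)%N by rewrite lt0n msize_poly_eq0.
case: (msize g) => // s _ /=; rewrite mulnS; lia.
Qed.

Lemma msizeCM c h : (msize (c%:MP * h) <= msize h)%N.
Proof. by rewrite mul_mpolyC msizeZ_le. Qed.


Lemma msizeXX_le g1 g2 s k : (msize (g1 - g2) <= s)%N ->
  (msize g1 <= s.+1)%N -> (msize g2 <= s.+1)%N ->
  (msize (g1 ^+ k - g2 ^+ k) <= s * k)%N.
Proof.
move=> H12 H1 H2; elim: k => [|k IH]; first by rewrite !expr0 subrr msize0.
have -> : g1 ^+ k.+1 - g2 ^+ k.+1 = g1 ^+ k * (g1 - g2) + (g1 ^+ k - g2 ^+ k) * g2.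
  by rewrite !exprS; ring.
apply: leq_trans (msizeD_le _ _) _; rewrite geq_max; apply/andP; split.
  apply: leq_trans (msizeM_le2 _ _) _.
  have := leq_add (@msizeX_le _ _ k H1) H12; lia.
apply: leq_trans (msizeM_le2 _ _) _.
have := leq_add IH H2; lia.
Qed.

Lemma msizeD_eq g h : (msize h < msize g)%N -> msize (g + h) = msize g.
Proof.
move=> Hlt; have nzg : g != 0 by rewrite -msize_poly_eq0 -lt0n; apply: leq_ltn_trans Hlt.
apply/eqP; rewrite eqn_leq; apply/andP; split.
  by apply: leq_trans (msizeD_le _ _) _; rewrite geq_max leqnn ltnW.
have Hd := mlead_deg nzg.
have hy : h@_(mlead g) = 0.
  have Hle : (msize h <= mdeg (mlead g))%N by rewrite -ltnS Hd.
  by move/msize_leP: Hle; apply.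
have : mlead g \in msupp (g + h).
  by rewrite mcoeff_msupp mcoeffD hy addr0 mleadc_eq0.
by move/msize_mdeg_lt; rewrite -Hd.
Qed.

Lemma bigmax_eqD N (P : pred nat) D : (D < N)%N -> P D ->
  (forall k, (k < N)%N -> P k -> (k <= D)%N) ->
  (\max_(k < N | P k) (k : nat))%N = D.
Proof.
move=> HD PD H; apply/eqP; rewrite eqn_leq; apply/andP; split.
  by apply/bigmax_leqP => k Pk; apply: H.
exact: (@leq_bigmax_cond _ (fun k : 'I_N => P k) (fun k : 'I_N => (k : nat)) (Ordinal HD) PD).
Qed.

Variable S : divringClosed K.

Lemma hcompP k h : reflect (forall mo, mdeg mo = k -> h@_mo \in S)
  (hcomp k h \is a mpolyOver n S).
Proof.
apply: (iffP (mpolyOverP _)) => H mo.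
  by move=> Hmo; have := H mo; rewrite mcoeff_hcomp Hmo eqxx.
by rewrite mcoeff_hcomp; case: eqP => [/H//|_]; rewrite rpred0.
Qed.

Lemma cancelF f g : f \is a mpolyOver n S -> f != 0 ->
  f * g \is a mpolyOver n S -> g \is a mpolyOver n S.
Proof.
move=> Sf nzf; have [k Hk] : exists k, (size (msupp g) < k)%N by exists (size (msupp g)).+1.
elim: k g Hk => [//|k IH] g Hk Sfg.
have [->|nzg] := eqVneq g 0; first exact: mpolyOver0.
set lg := mlead g; set c := g@_lg.
have Sc : c \in S.
  have E := mleadcM f g.
  have nzl : mleadc f != 0 by rewrite mleadc_eq0.
  have -> : c = (f * g)@_(mlead f + mlead g) / mleadc f.
    by rewrite E mulrC mulKf.
  by apply: rpred_div; apply/(mpolyOverP _).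
set g' := g - c *: 'X_[lg].
have Eg : g = g' + c *: 'X_[lg] by rewrite subrK.
have Sg' : g' \is a mpolyOver n S.
  apply: IH.
    rewrite (perm_size (msupp_rem g lg)) size_rem ?mlead_supp //.
    by move: Hk (mlead_supp nzg); case: (msupp g) => //= a s; lia.
  have -> : f * g' = f * g - c *: (f * 'X_[lg]) by rewrite mulrBr scalerAr.
  by rewrite rpredB // mpolyOverZ // rpredM // mpolyOverX.
by rewrite Eg rpredD // mpolyOverZ // mpolyOverX.
Qed.

End Aux.
Arguments trunc {K}.

Lemma arith1 (m r a b c d i u v : nat) : (m + d = a + (m + (m + b)))%N ->
  (r.+1 + (i + c) <= m + b)%N -> (u + v <= a.+1 + (r + (r + c)).+1)%N ->
  ((u + v).-1 <= d + r)%N.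
Proof. lia. Qed.

Lemma arith2 (m n r : nat) : (r < m)%N -> (m * n.+1 - (m * n + r) = m - r)%N.
Proof. rewrite mulnS; lia. Qed.

Lemma arith3 (m n : nat) : (0 < m)%N -> ((m * n).+1 < (m * n.+1).+1)%N.
Proof. rewrite mulnS; lia. Qed.

Lemma arith4 (m n r : nat) : (r < m)%N -> (m * n + r < (m * n.+1).+1)%N.
Proof. rewrite mulnS; lia. Qed.

Theorem theorem24 (K : fieldType) (F : divringClosed K)
  (charK0 : [pchar K] =i pred0)
  (Fproper : exists x : K, x \notin F)
  (p : {poly K}) (q : {mpoly K[2]})
  (p_nonconst : (1 < size p)%N)
  (lc_in_F : lead_coef p \in F) (lc_neq0 : lead_coef p != 0)
  (q_notin : q \isn't a mpolyOver 2 F)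
  (qm_neq0 : hcomp (tdeg q) q != 0)
  (qm_in : hcomp (tdeg q) q \is a mpolyOver 2 F)
  (qj : exists j : nat, (1 <= j)%N /\ hcomp j q \isn't a mpolyOver 2 F) :
  pcompq p q \isn't a mpolyOver 2 F /\ DF F (pcompq p q) = DF F q.
Proof.
set m := tdeg q.
have nzq : q != 0 by apply: contraNneq q_notin => ->; exact: mpolyOver0.
have hsq : msize q = m.+1.
  by rewrite /m /tdeg prednK // lt0n msize_poly_eq0.
have hc0 : forall (h : {mpoly K[2]}) (k : nat), (msize h <= k)%N -> hcomp k h = 0.
  move=> h k Hk; apply/mpolyP => mo; rewrite mcoeff_hcomp mcoeff0.
  by case: eqP => // Hmo; move/msize_leP: Hk; apply; rewrite Hmo.
have hq0 : forall mo, (m < mdeg mo)%N -> q@_mo = 0.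
  move=> mo H; have Hle : (msize q <= mdeg mo)%N by rewrite hsq.
  by move/msize_leP: Hle; apply.
case: qj => j [j1 Pj].
have jlt : (j < msize q)%N.
  rewrite ltnNge; apply/negP => Hle; move: Pj; rewrite hc0 //.
  by rewrite mpolyOver0.
set r := (\max_(k < msize q | hcomp k q \isn't a mpolyOver 2 F) (k : nat))%N.
have jr : (j <= r)%N :=
  @leq_bigmax_cond _ (fun k : 'I_(msize q) => hcomp k q \isn't a mpolyOver 2 F)
    (fun k => (k : nat)) (Ordinal jlt) Pj.
have [r_lt hPr] : (r < msize q)%N /\ hcomp r q \isn't a mpolyOver 2 F.
  have cardA : (0 < #|[pred k : 'I_(msize q) | hcomp k q \isn't a mpolyOver 2 F]|)%N.
    by apply/card_gt0P; exists (Ordinal jlt).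
  have [i0 Hi0 Heq] := eq_bigmax_cond (fun k : 'I_(msize q) => (k : nat)) cardA.
  have -> : r = i0 by exact: Heq.
  by split; [exact: ltn_ord | exact: Hi0].
have hr_max : forall k, (r < k)%N -> hcomp k q \is a mpolyOver 2 F.
  move=> k Hk; case: (ltnP k (msize q)) => Hkq; last by rewrite hc0 // mpolyOver0.
  apply/negPn/negP => Pk.
  have : (k <= r)%N :=
    @leq_bigmax_cond _ (fun k : 'I_(msize q) => hcomp k q \isn't a mpolyOver 2 F)
      (fun k => (k : nat)) (Ordinal Hkq) Pk.
  by rewrite leqNgt Hk.
have hr1 : (1 <= r)%N by apply: leq_trans jr.
have hrm : (r < m)%N.
  rewrite ltn_neqAle; apply/andP; split; last by rewrite -ltnS -hsq.
  by apply/eqP => Er; move: hPr; rewrite Er qm_in.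

have hqF : forall mo, (r < mdeg mo)%N -> q@_mo \in F.
  by move=> mo H; exact: (elimT (hcompP K F (mdeg mo) q) (hr_max _ H) mo erefl).
set A := trunc (fun mo => r < mdeg mo)%N q.
have hA : A \is a mpolyOver 2 F.
  apply/mpolyOverP => mo; rewrite mcoeff_trunc.
  by case: ifP => H; [exact: hqF | exact: rpred0].
set qm := hcomp m q.
set qr := hcomp r q.
set B := q - A.
have hB : (msize B <= r.+1)%N.
  by apply/msize_leP => mo H; rewrite mcoeffB mcoeff_trunc H subrr.
have hAm : (msize (A - qm) <= m)%N.
  apply/msize_leP => mo H; rewrite mcoeffB mcoeff_trunc mcoeff_hcomp.
  have [Heq|Hgt] : mdeg mo = m \/ (m < mdeg mo)%N by lia.
    by rewrite Heq eqxx hrm subrr.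
  by rewrite hq0 //; do 2 case: ifP => _; rewrite ?subrr ?subr0 ?sub0r ?oppr0.
have hAs : (msize A <= m.+1)%N.
  by apply/msize_leP => mo H; rewrite mcoeff_trunc hq0 //; case: ifP.
have hqms : (msize qm <= m.+1)%N.
  by apply/msize_leP => mo H; rewrite mcoeff_hcomp hq0 //; case: ifP.
have hBr : (msize (B - qr) <= r)%N.
  apply/msize_leP => mo H; rewrite !mcoeffB mcoeff_trunc mcoeff_hcomp.
  have [Heq|Hgt] : mdeg mo = r \/ (r < mdeg mo)%N by lia.
    by rewrite Heq ltnn eqxx subr0 subrr.
  by rewrite Hgt (gtn_eqF Hgt) subrr subr0.
have hqrs : (msize qr <= r.+1)%N.
  apply/msize_leP => mo H; rewrite mcoeff_hcomp.
  by case: eqP => // Hmo; move: H; rewrite Hmo ltnn.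
have hqm_h : qm \is m.-homog.
  apply/dhomogP => mo; rewrite mcoeff_msupp mcoeff_hcomp.
  by case: (mdeg mo =P _) => [E _|_]; [exact: E | rewrite eqxx].
have hqr_h : qr \is r.-homog.
  apply/dhomogP => mo; rewrite mcoeff_msupp mcoeff_hcomp.
  by case: (mdeg mo =P _) => [E _|_]; [exact: E | rewrite eqxx].
have [n' Hsp] : exists n', size p = n'.+2.
  by move: p_nonconst; case: (size p) => [|[|k]] // _; exists k.
set an := lead_coef p.
have han : an = p`_n'.+1 by rewrite /an lead_coefE Hsp.
have Epq : pcompq p q =
    \sum_(i < n'.+1) (p`_i)%:MP * q ^+ i + an%:MP * q ^+ n'.+1.
  rewrite /pcompq horner_coef size_map_poly Hsp big_ord_recr /= han.
  congr (_ + _); first by apply: eq_bigr => i _; rewrite coef_map.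
  by rewrite coef_map.
set R1 := \sum_(i < n'.+1) (p`_i)%:MP * q ^+ i.
have hR1 : (msize R1 <= (m * n').+1)%N.
  apply: leq_trans (msize_sum _ _ _) _.
  apply/bigmax_leqP => i _; apply: leq_trans (msizeCM _ _ _) _.
  rewrite msizeX_eq // hsq /= ltnS leq_mul2l -ltnS ltn_ord orbT //.
set P := A ^+ n'.
set Q := qm ^+ n'.
set N := (n'.+1)%:R : {mpoly K[2]}.
set D := (m * n' + r)%N.
have [E [hqn hE]] : exists E, q ^+ n'.+1 = A * P + N * P * B + E /\ (msize E <= D)%N.
  have hqAB : q = A + B by rewrite /B addrC subrK.
  rewrite {1}hqAB exprDn big_ord_recl big_ord_recl.
  set E := \sum_(i < n') _.
  exists E; split.
    have -> : (lift ord0 (ord0 : 'I_n'.+1) : nat) = 1%N by [].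
    rewrite subn0 expr0 mulr1 bin0 mulr1n subn1 /= expr1 bin1 exprS -/P.
    rewrite -mulr_natl /N; ring.
  rewrite /E; apply: leq_trans (msize_sum _ _ _) _.
  apply/bigmax_leqP => i _.
  have -> : (lift ord0 (lift ord0 i) : nat) = i.+2 by [].
  rewrite -scaler_nat; apply: leq_trans (msizeZ_le _ _) _.
  apply: leq_trans (msizeM_le2 _ _ _) _.
  have := leq_add (@msizeX_le _ _ _ (n'.+1 - i.+2) hAs) (@msizeX_le _ _ _ i.+2 hB).
  have hi := ltn_ord i.
  set x := (n'.+1 - i.+2)%N.
  have Hx : (x + i.+2 = n'.+1)%N by rewrite /x; lia.
  have Hmn : (m * n'.+1 = m * x + m * i.+2)%N by rewrite -mulnDr Hx.
  have := leq_mul hrm (leqnn i.+1).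
  rewrite /D; move: Hmn; rewrite !mulnS !mulSn.
  move: (m * x)%N (m * i)%N (r * i)%N (m * n')%N => a b c d.
  exact: arith1.
set cM := (an * (n'.+1)%:R)%:MP : {mpoly K[2]}.
set M := cM * (Q * qr).
set L := R1 + an%:MP * E + cM * (P * (B - qr) + (P - Q) * qr).
have hpq : pcompq p q = an%:MP * (A * P) + M + L.
  rewrite Epq -/R1 hqn /L /M /cM rmorphM rmorph_nat -/N; ring.
have hL : (msize L <= D)%N.
  apply: leq_trans (msizeD_le _ _) _; rewrite geq_max; apply/andP; split.
    apply: leq_trans (msizeD_le _ _) _; rewrite geq_max; apply/andP; split.
      apply: leq_trans hR1 _; by rewrite /D -addn1 leq_add2l.
    by apply: leq_trans (msizeCM _ _ _) _.
  apply: leq_trans (msizeCM _ _ _) _.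
  apply: leq_trans (msizeD_le _ _) _; rewrite geq_max; apply/andP; split.
    apply: leq_trans (msizeM_le2 _ _ _) _.
    have := leq_add (@msizeX_le _ _ _ n' hAs) hBr.
    rewrite /D; move: (msize P) (msize (B - qr)) => u v; clear; lia.
  apply: leq_trans (msizeM_le2 _ _ _) _.
  have := leq_add (@msizeXX_le _ _ _ _ n' hAm hAs hqms) hqrs.
  rewrite /D; move: (msize (P - Q)) (msize qr) => u v; clear; lia.
have hM : M \is D.-homog.
  rewrite /M /cM mul_mpolyC; apply: dhomogZ; rewrite /D.
  by apply: dhomogM; [exact: dhomogMn | exact: hqr_h].
have hAP : an%:MP * (A * P) \is a mpolyOver 2 F.
  by rewrite rpredM ?mpolyOverC ?rpredM ?rpredX.
have hcoef : forall mo, (D <= mdeg mo)%N ->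
    (pcompq p q)@_mo = (an%:MP * (A * P))@_mo + M@_mo.
  move=> mo H; have HL0 : L@_mo = 0 by move/msize_leP: hL; apply.
  by rewrite hpq mcoeffD HL0 addr0 mcoeffD.
have hk : forall k, (D < k)%N -> hcomp k (pcompq p q) \is a mpolyOver 2 F.
  move=> k Hk; apply/(hcompP _ _ _ _) => mo Hmo.
  have HDk : (D <= mdeg mo)%N by rewrite Hmo ltnW.
  rewrite (hcoef _ HDk) (dhomog_nemf_coeff hM) ?addr0.
    by move/mpolyOverP: hAP; apply.
  by apply/negP => /eqP Hm; have Hm' : mdeg mo = D := Hm; move: Hk; rewrite -Hm' Hmo ltnn.
have hN : (n'.+1)%:R != 0 :> K by rewrite (proj1 (pcharf0P K) charK0).
have hD : hcomp D (pcompq p q) \isn't a mpolyOver 2 F.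
  apply/negP => HD.
  have HM : M \is a mpolyOver 2 F.
    apply/mpolyOverP => mo; case: (eqVneq (mdeg mo) D) => Hmo.
      have Hc := hcoef mo (eq_leq (esym Hmo)).
      have -> : M@_mo = (pcompq p q)@_mo - (an%:MP * (A * P))@_mo.
        by rewrite Hc addrAC subrr add0r.
      rewrite rpredB //.
        exact: (elimT (hcompP K F D _) HD mo Hmo).
      by move/mpolyOverP: hAP; apply.
    by rewrite (dhomog_nemf_coeff hM Hmo) rpred0.
  have : qr \is a mpolyOver 2 F.
    apply: (@cancelF _ F (cM * Q)).
    - by rewrite rpredM ?rpredX // /cM mpolyOverC rpredM // rpred_nat.
    - by rewrite mulf_neq0 ?expf_neq0 // /cM mpolyC_eq0 mulf_neq0.
    - by rewrite -mulrA.
  by move=> Hqr; move: hPr; rewrite Hqr.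
have hpqsize : msize (pcompq p q) = (m * n'.+1).+1.
  rewrite Epq -/R1 addrC msizeD_eq.
    by rewrite mul_mpolyC msizeZ // msizeX_eq // hsq.
  rewrite mul_mpolyC msizeZ // msizeX_eq // hsq /=.
  apply: leq_ltn_trans hR1 _.
  exact: arith3 (leq_ltn_trans (leq0n r) hrm).
have pq_notin : pcompq p q \isn't a mpolyOver 2 F.
  apply/negP => H; move/negP: hD; apply; apply/(hcompP _ _ _ _) => mo _.
  by move/mpolyOverP: H; apply.
split => //.
rewrite /DF (negbTE pq_notin) (negbTE q_notin) -/r.
rewrite (@bigmax_eqD (msize (pcompq p q))
   (fun k => hcomp k (pcompq p q) \isn't a mpolyOver 2 F) D).
- rewrite /tdeg hpqsize -/m /=; exact: arith2.
- by rewrite hpqsize; exact: arith4.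
- exact: hD.
- move=> k _ Pk; rewrite leqNgt; apply/negP => Hk.
  by move: Pk; rewrite hk.
Qed.
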